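(* There exists a constant $\alpha>0$ such that for every $P_7$-free graph $G$, for every minimal separator $S$ of $G$, and for every probability measure $\mu$ on $S$, there exists a vertex $v\in V(G)$ with $\mu(N(v))\ge \alpha$.
   Context: All graphs are finite, simple and undirected. $P_k$ denotes the path on $k$ vertices; $G$ is $P_k$-free if it has no induced subgraph isomorphic to $P_k$. $N(v)$ is the open neighbourhood of $v$, and $\mu(N(v))$ means $\mu(N(v)\cap S)$. For distinct $s,t\in V(G)$, a set $S\subseteq V(G)$ is an $s$-$t$ separator if $s$ and $t$ lie in different connected components of $G\setminus S$; it is a minimal $s$-$t$ separator if no proper subset of it is an $s$-$t$ separator. $S$ is a minimal separator of $G$ if it is a minimal $s$-$t$ separator for some $s,t\in V(G)$. *)

(* Defs.v *)
From Stdlib Require Import Reals.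
From mathcomp Require Import all_boot all_order all_algebra.
From mathcomp Require Import Rstruct.
Set Implicit Arguments. Unset Strict Implicit. Unset Printing Implicit Defensive.
Import Order.TTheory GRing.Theory Num.Theory.

Definition simple_graph (T : finType) (e : rel T) : Prop :=
  symmetric e /\ irreflexive e.

Definition has_induced_path (T : finType) (e : rel T) (k : nat) : Prop :=
  exists f : 'I_k -> T, injective f /\
    forall i j : 'I_k, e (f i) (f j) = ((i.+1 == j :> nat) || (j.+1 == i :> nat)).

Definition Pk_free (T : finType) (e : rel T) (k : nat) : Prop :=
  ~ has_induced_path e k.

Definition del_rel (T : finType) (e : rel T) (S : {set T}) : rel T :=
  [rel x y | [&& e x y, x \notin S & y \notin S]].

Definition separates (T : finType) (e : rel T) (S : {set T}) (s t : T) : Prop :=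
  [/\ s \notin S, t \notin S & ~~ connect (del_rel e S) s t].

Definition minimal_st_separator (T : finType) (e : rel T) (S : {set T}) (s t : T) : Prop :=
  separates e S s t /\ forall S' : {set T}, S' \proper S -> ~ separates e S' s t.

Definition minimal_separator (T : finType) (e : rel T) (S : {set T}) : Prop :=
  exists s t : T, s != t /\ minimal_st_separator e S s t.

Definition prob_on (T : finType) (S : {set T}) (mu : T -> R) : Prop :=
  (forall x, x \in S -> (0 <= mu x)%R) /\ (\sum_(x in S) mu x = 1)%R.

Definition mu_nbhd (T : finType) (e : rel T) (S : {set T}) (mu : T -> R) (v : T) : R :=
  (\sum_(x in S | e v x) mu x)%R.

(* Main.v *)
Require Import Defs.
From Stdlib Require Import Reals.
From mathcomp Require Import all_boot all_order all_algebra.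
From mathcomp Require Import Rstruct.
From mathcomp Require Import ring lra.
Set Implicit Arguments. Unset Strict Implicit. Unset Printing Implicit Defensive.
Import Order.TTheory GRing.Theory Num.Theory.
Local Open Scope ring_scope.
Section P7.
Variables (T : finType) (e : rel T).
Hypotheses (esym : symmetric e) (eirr : irreflexive e).

Definition adj7 (i j : nat) := (i.+1 == j) || (j.+1 == i).

Lemma sep7 (i j : 'I_7) : i != j -> exists k : 'I_7, adj7 k i != adj7 k j.
Proof.
case: i j => [[|[|[|[|[|[|[|//]]]]]]] ?] [[|[|[|[|[|[|[|//]]]]]]] ?] //= _;
  first [ by exists (@Ordinal 7 0 isT) | by exists (@Ordinal 7 1 isT)
        | by exists (@Ordinal 7 2 isT) | by exists (@Ordinal 7 3 isT)
        | by exists (@Ordinal 7 4 isT) | by exists (@Ordinal 7 5 isT)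
        | by exists (@Ordinal 7 6 isT) ].
Qed.

Lemma P7_of (f : 'I_7 -> T) :
  (forall i j : 'I_7, e (f i) (f j) = adj7 i j) -> has_induced_path e 7.
Proof.
move=> H; exists f; split => // i j fij.
case: (eqVneq i j) => // /sep7 [k].
by rewrite -!H fij eqxx.
Qed.

Lemma P7_7 p0 p1 p2 p3 p4 p5 p6 :
  e p0 p1 -> e p1 p2 -> e p2 p3 -> e p3 p4 -> e p4 p5 -> e p5 p6 ->
  ~~ e p0 p2 -> ~~ e p0 p3 -> ~~ e p0 p4 -> ~~ e p0 p5 -> ~~ e p0 p6 ->
  ~~ e p1 p3 -> ~~ e p1 p4 -> ~~ e p1 p5 -> ~~ e p1 p6 ->
  ~~ e p2 p4 -> ~~ e p2 p5 -> ~~ e p2 p6 ->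
  ~~ e p3 p5 -> ~~ e p3 p6 -> ~~ e p4 p6 -> has_induced_path e 7.
Proof.
move=> h01 h12 h23 h34 h45 h56 h02 h03 h04 h05 h06 h13 h14 h15 h16
  h24 h25 h26 h35 h36 h46.
apply: (@P7_of (fun i : 'I_7 => nth p0 [:: p0; p1; p2; p3; p4; p5; p6] i)).
case=> [[|[|[|[|[|[|[|//]]]]]]] ?] [[|[|[|[|[|[|[|//]]]]]]] ?];
  rewrite /adj7 /=;
  first [ by rewrite eirr | by apply/negbTE | by rewrite esym; apply/negbTE
        | done | by rewrite esym ].
Qed.
End P7.
Definition ind (b : bool) : R := if b then 1 else 0.

Lemma ind_ge0 b : 0 <= ind b. Proof. by case: b; rewrite /ind //= ler01. Qed.
Lemma ind_le1 b : ind b <= 1. Proof. by case: b; rewrite /ind //= ler01. Qed.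
Lemma ind_or (a b : bool) : ind (a || b) <= ind a + ind b.
Proof. by case: a; case: b; rewrite /ind /=; lra. Qed.
Lemma ind_imp (a b : bool) : (a -> b) -> ind a <= ind b.
Proof. case: a; case: b; rewrite /ind /= => // h; try lra; by have := h isT. Qed.
Lemma ind_and (a b : bool) : ind (a && b) = ind a * ind b.
Proof. by case: a; case: b; rewrite /ind /=; ring. Qed.
Lemma ind_neg (a : bool) : ind (~~ a) = 1 - ind a.
Proof. by case: a; rewrite /ind /=; ring. Qed.
Lemma ind_true : ind true = 1. Proof. by []. Qed.
Lemma ind_false : ind false = 0. Proof. by []. Qed.

Section Expect.
Variables (T : finType) (S : {set T}) (mu : T -> R).
Hypothesis mu0 : forall x, x \in S -> 0 <= mu x.
Hypothesis mu1 : \sum_(x in S) mu x = 1.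

Definition E (f : T -> R) := \sum_(x in S) mu x * f x.

Lemma E_le f g : (forall x, x \in S -> f x <= g x) -> E f <= E g.
Proof. move=> h; apply: ler_sum => x xS; apply: ler_wpM2l; [exact: mu0|exact: h]. Qed.

Lemma E_ge0 f : (forall x, x \in S -> 0 <= f x) -> 0 <= E f.
Proof. move=> h; apply: sumr_ge0 => x xS; apply: mulr_ge0; [exact: mu0|exact: h]. Qed.

Lemma E_add f g : E (fun x => f x + g x) = E f + E g.
Proof. by rewrite /E -big_split; apply: eq_bigr => x _; rewrite mulrDr. Qed.

Lemma E_sub f g : E (fun x => f x - g x) = E f - E g.
Proof. by rewrite /E -sumrB; apply: eq_bigr => x _; rewrite mulrBr. Qed.

Lemma E_scal c f : E (fun x => c * f x) = c * E f.
Proof. by rewrite /E mulr_sumr; apply: eq_bigr => x _; rewrite mulrCA. Qed.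

Lemma E_scalr c f : E (fun x => f x * c) = E f * c.
Proof. by rewrite /E mulr_suml; apply: eq_bigr => x _; rewrite mulrA. Qed.

Lemma E_const c : E (fun _ => c) = c.
Proof. by rewrite /E -mulr_suml mu1 mul1r. Qed.

Lemma E_ext f g : (forall x, x \in S -> f x = g x) -> E f = E g.
Proof. by move=> h; apply: eq_bigr => x xS; rewrite h. Qed.

Lemma E_swap (f : T -> T -> R) :
  E (fun x => E (fun y => f x y)) = E (fun y => E (fun x => f x y)).
Proof.
rewrite /E; under eq_bigr do rewrite mulr_sumr.
rewrite exchange_big /=; apply: eq_bigr => y _; rewrite mulr_sumr.
by apply: eq_bigr => x _; rewrite mulrCA.
Qed.

Lemma E_prod f g : E (fun x => E (fun y => f x * g y)) = E f * E g.
Proof.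
rewrite -E_scalr; apply: E_ext => x _; exact: E_scal.
Qed.

Lemma E_nbhd (e : rel T) u : E (fun x => ind (e u x)) = mu_nbhd e S mu u.
Proof.
by rewrite /mu_nbhd /E big_mkcondr /=; apply: eq_bigr => x _; rewrite /ind; case: (e u x); rewrite ?mulr1 ?mulr0.
Qed.

Lemma E_exists f g : E f < E g -> exists2 x, x \in S & f x < g x.
Proof.
move=> h; case: (boolP [exists x, (x \in S) && (f x < g x)]).
  by case/existsP=> x /andP[? ?]; exists x.
move/existsPn=> hn; suff: E g <= E f by rewrite leNgt h.
apply: E_le => x xS; move: (hn x); rewrite xS /= -leNgt; exact.
Qed.

End Expect.

Section Wit.
Variables (T : finType) (e : rel T).

Definition Kr (Z : {set T}) s t := [exists a, [&& a \in Z, e a s & e a t]].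
Definition Rr (Z : {set T}) s t := [exists a1, exists a2,
  [&& a1 \in Z, a2 \in Z, e a1 s, ~~ e a1 t, e a2 t, ~~ e a2 s & e a1 a2]].
Definition comp (Z : {set T}) v := [forall b, (b \in Z) ==> e v b].

Definition kw (Z : {set T}) s t := odflt s [pick a | [&& a \in Z, e a s & e a t]].
Definition rw (Z : {set T}) s t := odflt (s, s) [pick p : T * T |
  [&& p.1 \in Z, p.2 \in Z, e p.1 s, ~~ e p.1 t, e p.2 t, ~~ e p.2 s & e p.1 p.2]].
Definition bw (Z : {set T}) v := odflt (v, v) [pick p : T * T |
  [&& p.1 \in Z, p.2 \in Z, e v p.1, ~~ e v p.2 & e p.1 p.2]].

Lemma kwP (Z : {set T}) s t : Kr Z s t -> [/\ kw Z s t \in Z, e (kw Z s t) s & e (kw Z s t) t].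
Proof.
rewrite /kw; case: pickP => [a /and3P[*]|h /existsP[a]]; first by split.
by rewrite h.
Qed.

Lemma rwP (Z : {set T}) s t : Rr Z s t ->
  [/\ (rw Z s t).1 \in Z, (rw Z s t).2 \in Z, e (rw Z s t).1 s, ~~ e (rw Z s t).1 t &
   [/\ e (rw Z s t).2 t, ~~ e (rw Z s t).2 s & e (rw Z s t).1 (rw Z s t).2]].
Proof.
rewrite /rw; case: pickP => [p /andP[? /andP[? /andP[? /andP[? /andP[? /andP[? ?]]]]]]|h /existsP[a1] /existsP[a2]];
  first by do !split.
by have := h (a1, a2) => /= ->.
Qed.

Lemma bwP (Z : {set T}) v : (exists p : T * T,
  [&& p.1 \in Z, p.2 \in Z, e v p.1, ~~ e v p.2 & e p.1 p.2]) ->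
  [/\ (bw Z v).1 \in Z, (bw Z v).2 \in Z, e v (bw Z v).1, ~~ e v (bw Z v).2 &
      e (bw Z v).1 (bw Z v).2].
Proof.
rewrite /bw; case: pickP => [p /and5P[*]|h [p]]; first by split.
by rewrite h.
Qed.

End Wit.

Definition cutcon (T : finType) (e : rel T) (X : {set T}) :=
  forall D : {set T}, D \subset X -> (exists d, d \in D) ->
  (exists2 y, y \in X & y \notin D) ->
  exists d y, [/\ d \in D, y \in X, y \notin D & e d y].

Section Comb.
Variables (T : finType) (e : rel T) (S X Y : {set T}).
Hypotheses (esym : symmetric e) (eirr : irreflexive e) (P7f : ~ has_induced_path e 7).
Hypothesis fullX : forall x, x \in S -> exists2 a, a \in X & e x a.
Hypothesis fullY : forall x, x \in S -> exists2 b, b \in Y & e x b.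
Hypothesis anti : forall a b, a \in X -> b \in Y -> ~~ e a b.
Hypotheses (cutX : cutcon e X) (cutY : cutcon e Y).

Lemma anti' a b : a \in X -> b \in Y -> ~~ e b a.
Proof. by rewrite esym; apply: anti. Qed.

Lemma bY_spec v : v \in S -> ~~ comp e Y v ->
  [/\ (bw e Y v).1 \in Y, (bw e Y v).2 \in Y, e v (bw e Y v).1,
      ~~ e v (bw e Y v).2 & e (bw e Y v).1 (bw e Y v).2].
Proof.
move=> vS nc; apply: bwP.
have [b bY evb] := fullY vS.
move/forallPn: nc => [y]; rewrite negb_imply => /andP[yY nvy].
have [|||d [y' [dD y'Y y'D dy']]] := cutY (D := [set c in Y | e v c]).
- by apply/subsetP => c; rewrite inE => /andP[].
- by exists b; rewrite inE bY evb.
- by exists y => //; rewrite inE yY.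
exists (d, y') => /=; move: dD y'D; rewrite !inE => /andP[dY evd] /negP nv.
by apply/and5P; split => //; apply/negP => h; apply: nv; apply/andP; split.
Qed.

Lemma F1 s t : s \in S -> t \in S -> ~~ comp e Y t -> ~~ e t s ->
  ~~ e (bw e Y t).1 s -> ~~ e (bw e Y t).2 s -> Kr e X s t || Rr e X s t.
Proof.
move=> sS tS nct nts nbs nws.
case: (bY_spec tS nct); set b := (bw e Y t).1; set w := (bw e Y t).2.
move=> bY wY tb ntw ebw.
case: (boolP (Kr e X s t)) => //= nK.
case: (boolP (Rr e X s t)) => // nR.
exfalso; apply: P7f.
have nK' : forall a, a \in X -> e a s -> e a t -> False.
  by move=> a aX eas eat; move/existsP: nK; apply; exists a; rewrite aX eas eat.
set D0 := [set c in X | e t c].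
set D1 := [set c in X | [exists d in D0, (c == d) || e c d]].
set D2 := [set c in X | [exists d in D1, (c == d) || e c d]].
have D0X c : c \in D0 -> c \in X by rewrite inE => /andP[].
have D1X c : c \in D1 -> c \in X by rewrite inE => /andP[].
have D2X c : c \in D2 -> c \in X by rewrite inE => /andP[].
have D01 c : c \in D0 -> c \in D1.
  move=> cD; rewrite inE (D0X _ cD); apply/existsP; exists c; by rewrite cD eqxx.
have D12 c : c \in D1 -> c \in D2.
  move=> cD; rewrite inE (D1X _ cD); apply/existsP; exists c; by rewrite cD eqxx.
have nb01 d c : d \in D0 -> c \in X -> c \notin D1 -> ~~ e d c.
  move=> dD cX; apply: contra => edc; rewrite inE cX; apply/existsP; exists d.
  by rewrite dD esym edc orbT.
have nb12 d c : d \in D1 -> c \in X -> c \notin D2 -> ~~ e d c.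
  move=> dD cX; apply: contra => edc; rewrite inE cX; apply/existsP; exists d.
  by rewrite dD esym edc orbT.
have nt0 c : c \in X -> c \notin D0 -> ~~ e t c.
  by move=> cX; apply: contra => tc; rewrite inE cX tc.
have st1 c : c \in D1 -> e s c -> False.
  rewrite inE => /andP[cX /existsP[d /andP[dD0 /orP[/eqP cd|ecd]]]] esc.
    by subst d; move: dD0; rewrite inE => /andP[_ tc]; apply: (nK' c) => //; rewrite esym.
  move: (dD0); rewrite inE => /andP[dX td].
  case: (boolP (e t c)) => tc; first by apply: (nK' c cX); rewrite esym.
  case: (boolP (e s d)) => sd; first by apply: (nK' d dX); rewrite esym.
  move/negP: nR; apply; apply/existsP; exists c; apply/existsP; exists d.
  by rewrite cX dX (esym c s) esc (esym c t) tc (esym d t) td (esym d s) sd ecd.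
have back2 c : c \in D2 -> c \notin D1 ->
    exists c1 c2, [/\ c1 \in D0, c2 \in D1, c2 \notin D0, e c1 c2 & e c2 c].
  rewrite inE => /andP[cX /existsP[d /andP[dD1 /orP[/eqP cd|ecd]]]] cD1.
    by subst d; rewrite dD1 in cD1.
  have dD0 : d \notin D0.
    apply: contra cD1 => dD0; rewrite inE cX; apply/existsP; exists d; by rewrite dD0 ecd orbT.
  move: (dD1); rewrite inE => /andP[dX /existsP[d' /andP[d'D0 /orP[/eqP dd'|edd']]]].
    by subst d'; rewrite d'D0 in dD0.
  by exists d', d; split => //; rewrite esym.
have nws' : ~~ e w t by rewrite esym.
have ewb : e w b by rewrite esym.
have ebt : e b t by rewrite esym.
case: (boolP [exists c3 in D2, e s c3]).
  case/existsP => c3 /andP[c3D2 sc3].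
  have c3D1 : c3 \notin D1 by apply/negP => h; exact: (st1 c3 h sc3).
  have [c1 [c2 [c1D0 c2D1 c2D0 e12 e23]]] := back2 c3 c3D2 c3D1.
  have c1X := D0X _ c1D0; have c2X := D1X _ c2D1; have c3X := D2X _ c3D2.
  have tc1 : e t c1 by move: c1D0; rewrite inE => /andP[].
  have nc1s : ~~ e c1 s by apply/negP => h; apply: (st1 c1 (D01 _ c1D0)); rewrite esym.
  have nc2s : ~~ e c2 s by apply/negP => h; apply: (st1 c2 c2D1); rewrite esym.
  have nc3t : c3 \notin D0 by apply: contra c3D1; exact: D01.
  have nt2 := nt0 _ c2X c2D0; have nt3 := nt0 _ c3X nc3t.
  have n13 := nb01 _ _ c1D0 c3X c3D1.
  have e3s : e c3 s by rewrite esym.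
  have nts' : ~~ e t s by [].
  apply: (@P7_7 T e esym eirr w b t c1 c2 c3 s) => //;
    first [ by apply: anti' | by rewrite esym | done ].
move/existsPn => n2.
have [a aX sa] := fullX sS.
have aD2 : a \notin D2 by apply: contraT; rewrite negbK => h; have := n2 a; rewrite h sa.
have [a0 a0X ta0] := fullX tS.
have [|||c3 [c4 [c3D2 c4X c4D2 e34]]] := cutX (D := D2).
- by apply/subsetP => c /D2X.
- by exists a0; apply/D12/D01; rewrite inE a0X ta0.
- by exists a.
have c3D1 : c3 \notin D1.
  apply: contra c4D2 => h; rewrite inE c4X; apply/existsP; exists c3; by rewrite h esym e34 orbT.
have [c1 [c2 [c1D0 c2D1 c2D0 e12 e23]]] := back2 c3 c3D2 c3D1.
have c1X := D0X _ c1D0; have c2X := D1X _ c2D1; have c3X := D2X _ c3D2.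
have tc1 : e t c1 by move: c1D0; rewrite inE => /andP[].
have nc3t : c3 \notin D0 by apply: contra c3D1; exact: D01.
have c4D0 : c4 \notin D0 by apply: contra c4D2 => h; exact/D12/D01.
have nt2 := nt0 _ c2X c2D0; have nt3 := nt0 _ c3X nc3t; have nt4 := nt0 _ c4X c4D0.
have n13 := nb01 _ _ c1D0 c3X c3D1.
have n14 := nb12 _ _ (D01 _ c1D0) c4X c4D2.
have n24 := nb12 _ _ c2D1 c4X c4D2.
apply: (@P7_7 T e esym eirr w b t c1 c2 c3 c4) => //;
  first [ by apply: anti' | by rewrite esym | done ].
Qed.

Lemma F2 y s t : s \in S -> Kr e X y s -> Kr e X y t -> ~~ comp e Y s ->
  ~~ e (bw e Y s).1 y -> ~~ e (bw e Y s).2 y ->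
  ~~ e (bw e Y s).1 t -> ~~ e (bw e Y s).2 t ->
  ~~ e s y -> ~~ e s t -> ~~ e y t ->
  ~~ e (kw e X y t) s -> ~~ e (kw e X y s) t -> Rr e X s t.
Proof.
move=> sS Kys Kyt ncs nby nwy nbt nwt nsy nst nyt n2s n1t.
case: (bY_spec sS ncs); set b := (bw e Y s).1; set w := (bw e Y s).2.
move=> bY wY sb nsw ebw.
case: (kwP Kys); set a1 := kw e X y s => a1X a1y a1s.
case: (kwP Kyt); set a2 := kw e X y t => a2X a2y a2t.
case: (boolP (e a1 a2)) => h.
  apply/existsP; exists a1; apply/existsP; exists a2.
  by rewrite a1X a2X a1s n1t a2t n2s h.
exfalso; apply: P7f.
apply: (@P7_7 T e esym eirr w b s a1 y a2 t) => //;
  first [ by apply: anti' | by rewrite esym | done ].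
Qed.

Lemma GT v z w : Rr e X z v -> Rr e Y w v -> ~~ e v z -> ~~ e z w -> ~~ e v w ->
  ~~ e (rw e Y w v).1 z -> ~~ e (rw e Y w v).2 z ->
  ~~ e (rw e X z v).1 w -> ~~ e (rw e X z v).2 w -> False.
Proof.
move=> RX RY nvz nzw nvw nb1 nb2 na1 na2.
case: (rwP RX); set a1 := (rw e X z v).1; set a2 := (rw e X z v).2.
move=> a1X a2X a1z na1v [a2v na2z a12].
case: (rwP RY); set b1 := (rw e Y w v).1; set b2 := (rw e Y w v).2.
move=> b1Y b2Y b1w nb1v [b2v nb2w b12].
apply: P7f.
apply: (@P7_7 T e esym eirr z a1 a2 v b2 b1 w) => //;
  first [ by apply: anti | by apply: anti' | by rewrite esym | done ].
Qed.

End Comb.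

Lemma ind_has (a : bool) (cs : seq bool) :
  (a -> has id cs) -> ind a <= \sum_(c <- cs) ind c.
Proof.
elim: cs a => [|c cs IH] a h; first by case: a h => [/(_ isT)|_]; [|rewrite /ind big_nil].
rewrite big_cons; case: (boolP c) => hc.
  by apply: (@le_trans _ _ 1); [exact: ind_le1|rewrite ind_true lerDl sumr_ge0 // => ? _; exact: ind_ge0].
rewrite /ind /= add0r; apply: IH => ha; have := h ha; by rewrite /= (negbTE hc).
Qed.

Section Bounds.
Variables (T : finType) (S : {set T}) (mu : T -> R).
Hypothesis mu0 : forall x, x \in S -> 0 <= mu x.
Hypothesis mu1 : \sum_(x in S) mu x = 1.
Local Notation EE := (E S mu).

Lemma bnd_in (f : T -> T -> R) c :
  (forall x, x \in S -> EE (fun y => f x y) <= c) -> EE (fun x => EE (fun y => f x y)) <= c.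
Proof. move=> h; rewrite -[c](E_const mu1); exact: E_le. Qed.

Lemma bnd_out (f : T -> T -> R) c :
  (forall y, y \in S -> EE (fun x => f x y) <= c) -> EE (fun x => EE (fun y => f x y)) <= c.
Proof. by move=> h; rewrite E_swap //; apply: bnd_in. Qed.

Lemma E2_add (f g : T -> T -> R) :
  EE (fun x => EE (fun y => f x y + g x y)) =
  EE (fun x => EE (fun y => f x y)) + EE (fun x => EE (fun y => g x y)).
Proof. rewrite -E_add; apply: E_ext => x _; exact: E_add. Qed.

Lemma E_ind_ge0 f : (forall x, 0 <= f x) -> 0 <= EE f.
Proof. by move=> h; apply: E_ge0. Qed.

End Bounds.

Lemma E2_const (T : finType) (S : {set T}) (mu : T -> R) (f : T -> R) :
  \sum_(x in S) mu x = 1 ->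
  E S mu (fun x => E S mu (fun _ => f x)) = E S mu f.
Proof. by move=> mu1; apply: E_ext => x _; rewrite E_const. Qed.

Section Avg.
Variables (T : finType) (e : rel T) (S X Y : {set T}) (mu : T -> R) (alpha : R) (y0 : T).
Hypotheses (esym : symmetric e) (eirr : irreflexive e) (P7f : ~ has_induced_path e 7).
Hypothesis fullX : forall x, x \in S -> exists2 a, a \in X & e x a.
Hypothesis fullY : forall x, x \in S -> exists2 b, b \in Y & e x b.
Hypothesis anti : forall a b, a \in X -> b \in Y -> ~~ e a b.
Hypotheses (cutX : cutcon e X) (cutY : cutcon e Y) (y0Y : y0 \in Y).
Hypothesis mu0 : forall x, x \in S -> 0 <= mu x.
Hypothesis mu1 : \sum_(x in S) mu x = 1.
Hypothesis small : forall u, mu_nbhd e S mu u <= alpha.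
Hypotheses (apos : 0 < alpha) (asmall : alpha <= 1/1000).
Local Notation EE := (E S mu).

Lemma Eb u : EE (fun x => ind (e u x)) <= alpha.
Proof. by rewrite E_nbhd. Qed.

Lemma Ecomp : EE (fun v => ind (comp e Y v)) <= alpha.
Proof.
apply: le_trans (Eb y0); apply: E_le => // v _; apply: ind_imp => /forallP/(_ y0).
by move/implyP/(_ y0Y); rewrite esym.
Qed.

Lemma Eind_ge0 f : EE (fun x => ind (f x)) >= 0.
Proof. by apply: E_ge0 => // x _; exact: ind_ge0. Qed.

Definition rhoR (Z : {set T}) v := EE (fun z => ind (Rr e Z z v)).

Lemma GTavg v : v \in S -> rhoR X v * rhoR Y v <= 7 * alpha.
Proof.
move=> vS; rewrite /rhoR -E_prod //.
pose a1 z := (rw e X z v).1; pose a2 z := (rw e X z v).2.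
pose b1 w := (rw e Y w v).1; pose b2 w := (rw e Y w v).2.
apply: (@le_trans _ _ (EE (fun z => EE (fun w =>
   ind (e v z) + ind (e z w) + ind (e v w) + ind (e (b1 w) z) + ind (e (b2 w) z)
   + ind (e (a1 z) w) + ind (e (a2 z) w))))).
  apply: E_le => // z zS; apply: E_le => // w wS; rewrite -ind_and.
  apply: le_trans (ind_has (cs := [:: e v z; e z w; e v w; e (b1 w) z; e (b2 w) z;
     e (a1 z) w; e (a2 z) w]) _) _; last by rewrite !big_cons big_nil addr0 !addrA.
  move=> /andP[RX RY]; apply/negPn/negP; rewrite /= !negb_or.
  move=> /andP[h1 /andP[h2 /andP[h3 /andP[h4 /andP[h5 /andP[h6 /andP[h7 _]]]]]]].
  exact: (GT esym eirr P7f anti RX RY h1 h2 h3 h4 h5 h6 h7).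
rewrite !E2_add.
have t1 : EE (fun z => EE (fun w => ind (e v z))) <= alpha by rewrite E2_const //; exact: Eb.
have t2 : EE (fun z => EE (fun w => ind (e z w))) <= alpha by apply: bnd_in => // z _; exact: Eb.
have t3 : EE (fun z => EE (fun w => ind (e v w))) <= alpha by apply: bnd_in => // z _; exact: Eb.
have t4 : EE (fun z => EE (fun w => ind (e (b1 w) z))) <= alpha by apply: bnd_out => // w _; exact: Eb.
have t5 : EE (fun z => EE (fun w => ind (e (b2 w) z))) <= alpha by apply: bnd_out => // w _; exact: Eb.
have t6 : EE (fun z => EE (fun w => ind (e (a1 z) w))) <= alpha by apply: bnd_in => // z _; exact: Eb.
have t7 : EE (fun z => EE (fun w => ind (e (a2 z) w))) <= alpha by apply: bnd_in => // z _; exact: Eb.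
lra.
Qed.


Definition bY v := (bw e Y v).1.
Definition wY v := (bw e Y v).2.
Definition aX y s := kw e X y s.
Definition zp y v z := ind (comp e Y z) + ind (e (aX y v) z).
Definition yp z y := ind (e (bY z) y) + ind (e (wY z) y) + ind (e z y).
Definition vp y z v := ind (e (bY z) v) + ind (e (wY z) v) + ind (e z v) + ind (e y v)
  + ind (e (aX y z) v).
Definition bad2 y z v := zp y v z + yp z y + vp y z v.
Definition Bad v := ind (comp e Y v) + EE (fun y => EE (fun z => bad2 y z v)).

Lemma bad2_ge0 y z v : 0 <= bad2 y z v.
Proof.
rewrite /bad2 /zp /yp /vp; have := ind_ge0.
move=> h; repeat apply: addr_ge0 => //.
Qed.

Lemma Bad_ge0 v : 0 <= Bad v.
Proof.
apply: addr_ge0; first exact: ind_ge0.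
apply: E_ge0 => // y _; apply: E_ge0 => // z _; exact: bad2_ge0.
Qed.

Lemma EBad : EE Bad <= 11 * alpha.
Proof.
rewrite /Bad E_add.
have -> : EE (fun v => EE (fun y => EE (fun z => bad2 y z v))) =
  EE (fun v => EE (fun y => EE (fun z => zp y v z))) +
  EE (fun v => EE (fun y => EE (fun z => yp z y))) +
  EE (fun v => EE (fun y => EE (fun z => vp y z v))).
  rewrite -!E_add; apply: E_ext => v _; rewrite -!E_add; apply: E_ext => y _.
  by rewrite -!E_add.
have h1 := Ecomp.
have h2 : EE (fun v => EE (fun y => EE (fun z => zp y v z))) <= 2 * alpha.
  apply: bnd_in => // v _; apply: bnd_in => // y _; rewrite /zp E_add.
  have := Ecomp; have := Eb (aX y v); lra.
have h3 : EE (fun v => EE (fun y => EE (fun z => yp z y))) <= 3 * alpha.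
  apply: bnd_in => // v _; apply: bnd_out => // z _; rewrite /yp !E_add.
  have := Eb (bY z); have := Eb (wY z); have := Eb z; lra.
have h4 : EE (fun v => EE (fun y => EE (fun z => vp y z v))) <= 5 * alpha.
  rewrite E_swap; apply: bnd_in => // y _; apply: bnd_out => // z _; rewrite /vp !E_add.
  have := Eb (bY z); have := Eb (wY z); have := Eb z; have := Eb y; have := Eb (aX y z); lra.
lra.
Qed.

Definition Lset := [set v in S | rhoR X v < 1/4].

Lemma Core : EE (fun v => ind (v \in Lset)) < 1/2.
Proof.
have ap := apos; have asm := asmall.
rewrite ltNge; apply/negP => hell.
set ell := EE _ in hell.
have [v /andP[/andP[vS vL] hB]] : exists v, (v \in S) && (v \in Lset) && (Bad v <= 30 * alpha).
  case: (boolP [exists v, (v \in S) && (v \in Lset) && (Bad v <= 30 * alpha)]).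
    by case/existsP => v h; exists v.
  move/existsPn => hn; exfalso.
  have : EE (fun v => ind (v \in Lset) * (30 * alpha)) <= EE Bad.
    apply: E_le => // v vS; case: (boolP (v \in Lset)) => vL.
      by have := hn v; rewrite vS vL /= -ltNge mul1r => /ltW.
    by rewrite /ind mul0r; exact: Bad_ge0.
  rewrite E_scalr -/ell => h1; have h2 := EBad.
  have h3 : (1/2) * (30 * alpha) <= ell * (30 * alpha).
    by apply: ler_wpM2r => //; apply: mulr_ge0 => //; apply: ltW.
  have h4 := le_trans h3 (le_trans h1 h2); lra.
have rv : rhoR X v < 1/4 by move: vL; rewrite inE => /andP[].
have ncv : ~~ comp e Y v.
  apply/negP => cv; move: hB; rewrite /Bad cv ind_true.
  have : 0 <= EE (fun y => EE (fun z => bad2 y z v)).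
    by apply: E_ge0 => // y _; apply: E_ge0 => // z _; exact: bad2_ge0.
  lra.
pose Zs z := Kr e X z v && ~~ Rr e X z v.
pose mZ := EE (fun z => ind (Zs z)).
pose kapv := EE (fun y => ind (Kr e X y v)).
have hii : 1 - rhoR X v <= mZ + 3 * alpha.
  have -> : 1 - rhoR X v = EE (fun z => ind (~~ Rr e X z v)).
    rewrite (@E_ext _ _ _ (fun z => ind (~~ Rr e X z v)) (fun z => 1 - ind (Rr e X z v)));
      last by move=> z _; rewrite ind_neg.
    by rewrite E_sub (E_const mu1).
  apply: (@le_trans _ _ (EE (fun z => ind (Zs z) + ind (e v z) + ind (e (bY v) z)
      + ind (e (wY v) z)))).
    apply: E_le => // z zS.
    apply: le_trans (ind_has (cs := [:: Zs z; e v z; e (bY v) z; e (wY v) z]) _) _;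
      last by rewrite !big_cons big_nil addr0 !addrA.
    move=> nR; apply/negPn/negP; rewrite /= !negb_or.
    move=> /andP[h1 /andP[h2 /andP[h3 /andP[h4 _]]]].
    have := F1 esym eirr P7f fullX fullY anti cutX cutY zS vS ncv h2 h3 h4.
    by rewrite (negbTE nR) orbF => K; move: h1; rewrite /Zs K nR.
  rewrite !E_add /mZ; have := Eb v; have := Eb (bY v); have := Eb (wY v); lra.
have hk : mZ <= kapv.
  by apply: E_le => // y _; apply: ind_imp => /andP[].
have hiii : EE (fun y => EE (fun z => ind (Zs z) * (ind (Kr e X y z) * ind (Kr e X y v))))
    <= 30 * alpha.
  apply: le_trans hB; apply: (@le_trans _ _ (EE (fun y => EE (fun z => bad2 y z v)))).
    apply: E_le => // y yS; apply: E_le => // z zS; rewrite -!ind_and.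
    apply: le_trans (ind_has (cs := [:: comp e Y z; e (aX y v) z; e (bY z) y; e (wY z) y;
      e z y; e (bY z) v; e (wY z) v; e z v; e y v; e (aX y z) v]) _) _;
      last by rewrite !big_cons big_nil addr0 /bad2 /zp /yp /vp !addrA.
    move=> /andP[/andP[Kz nRz] /andP[Kyz Kyv]]; apply/negPn/negP; rewrite /= !negb_or.
    move=> /andP[h1 /andP[h2 /andP[h3 /andP[h4 /andP[h5 /andP[h6 /andP[h7 /andP[h8
      /andP[h9 /andP[h10 _]]]]]]]]]].
    have := F2 esym eirr P7f fullY anti cutY zS Kyz Kyv h1 h3 h4 h6 h7 h5 h8 h9 h2 h10.
    by rewrite (negbTE nRz).
  rewrite /Bad; apply: le_trans _ (lerD (ind_ge0 _) (lexx _)); by rewrite add0r.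
pose rest1 y z := ind (e z y) + ind (e (bY z) y) + ind (e (wY z) y).
have hiv : forall z, z \in S -> kapv <= rhoR X z
    + EE (fun y => ind (Kr e X y z) * ind (Kr e X y v)) + ind (comp e Y z)
    + EE (fun y => rest1 y z).
  move=> z zS; rewrite /kapv /rhoR -(E_const mu1 (ind (comp e Y z))) -!E_add.
  apply: E_le => // y yS.
  case: (boolP (Kr e X y v)) => Kyv; last first.
    rewrite ind_false mulr0 addr0 /rest1.
    have := ind_ge0 (Rr e X y z); have := ind_ge0 (comp e Y z); have := ind_ge0 (e z y).
    have := ind_ge0 (e (bY z) y); have := ind_ge0 (e (wY z) y); lra.
  rewrite ind_true mulr1 -[X in X <= _]ind_true.
  apply: le_trans (ind_has (cs := [:: Rr e X y z; Kr e X y z; comp e Y z; e z y;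
      e (bY z) y; e (wY z) y]) _) _; last by rewrite !big_cons big_nil addr0 /rest1 !addrA.
  move=> _; apply/negPn/negP; rewrite /= !negb_or.
  move=> /andP[h1 /andP[h2 /andP[h3 /andP[h4 /andP[h5 /andP[h6 _]]]]]].
  have := F1 esym eirr P7f fullX fullY anti cutX cutY yS zS h3 h4 h5 h6.
  by rewrite (negbTE h1) (negbTE h2).
pose ZL z := Zs z && (z \in Lset).
pose mZL := EE (fun z => ind (ZL z)).
have hv : kapv * mZL <= mZL / 4 + 30 * alpha + alpha + 3 * alpha.
  have e1 : EE (fun z => ind (ZL z) * kapv) <= EE (fun z => ind (ZL z) * (1/4)
      + ind (Zs z) * EE (fun y => ind (Kr e X y z) * ind (Kr e X y v))
      + ind (comp e Y z) + EE (fun y => rest1 y z)).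
    apply: E_le => // z zS; case: (boolP (ZL z)) => hz.
      have zL : z \in Lset by case/andP: hz.
      have Zz : Zs z by case/andP: hz.
      have rz : rhoR X z < 1/4 by move: zL; rewrite inE => /andP[].
      rewrite Zz !ind_true !mul1r; have := hiv z zS; lra.
    rewrite /ind mul0r mul0r add0r.
    have g1 : 0 <= (if Zs z then 1 else 0) * EE (fun y => ind (Kr e X y z) * ind (Kr e X y v)).
      apply: mulr_ge0; first exact: ind_ge0.
      by apply: E_ge0 => // y _; apply: mulr_ge0; exact: ind_ge0.
    have g2 := ind_ge0 (comp e Y z).
    have g3 : 0 <= EE (fun y => rest1 y z).
      apply: E_ge0 => // y _; rewrite /rest1.
      by repeat apply: addr_ge0; exact: ind_ge0.
    rewrite /ind in g2; lra.
  rewrite E_scalr -/mZL in e1; rewrite !E_add E_scalr -/mZL in e1.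
  have e2 : EE (fun z => ind (Zs z) * EE (fun y => ind (Kr e X y z) * ind (Kr e X y v)))
      <= 30 * alpha.
    apply: le_trans hiii; rewrite E_swap; apply: E_le => // z _; rewrite -E_scal; exact: lexx.
  have e3 := Ecomp.
  have e4 : EE (fun x => EE (rest1^~ x)) <= 3 * alpha.
    apply: bnd_in => // z _; rewrite /rest1 !E_add.
    have := Eb z; have := Eb (bY z); have := Eb (wY z); lra.
  lra.
have hsplit : mZ = mZL + EE (fun z => ind (Zs z && (z \notin Lset))).
  rewrite /mZ /mZL -E_add; apply: E_ext => z _; rewrite /ZL.
  by case: (z \in Lset); case: (Zs z); rewrite /ind /= ?addr0 ?add0r.
have hn : EE (fun z => ind (Zs z && (z \notin Lset))) <= 1 - ell.
  apply: (@le_trans _ _ (EE (fun z => 1 - ind (z \in Lset)))).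
    by apply: E_le => // z _; rewrite -ind_neg; apply: ind_imp => /andP[].
  by rewrite E_sub (E_const mu1) -/ell.
have mZL0 : 247/1000 <= mZL by lra.
have kp : 497/1000 <= kapv - 1/4 by lra.
have hp : (497/1000) * (247/1000) <= (kapv - 1/4) * mZL.
  by apply: ler_pM => //; lra.
lra.
Qed.

End Avg.

Lemma closed_sub (T : finType) (r : rel T) (P : pred T) x y :
  (forall u w, P u -> r u w -> P w) -> P x -> connect r x y -> P y.
Proof.
move=> cl Px /connectP[p pth ->]; elim: p x Px pth => //= w p IH x Px /andP[rxw pth].
by apply: IH pth; exact: cl Px rxw.
Qed.

Section Sep.
Variables (T : finType) (e : rel T) (S : {set T}).
Hypotheses (esym : symmetric e) (eirr : irreflexive e).

Lemma del_sym (S' : {set T}) : symmetric (del_rel e S').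
Proof.
move=> x y; rewrite /del_rel /= esym.
by case: (x \in S'); case: (y \in S'); rewrite ?andbF ?andbT.
Qed.

Lemma csym (S' : {set T}) x y : connect (del_rel e S') x y = connect (del_rel e S') y x.
Proof. exact: (sym_connect_sym (del_sym S')). Qed.

Lemma notS (S' : {set T}) u y : u \notin S' -> connect (del_rel e S') u y -> y \notin S'.
Proof.
move=> uS; apply: (closed_sub (P := fun y => y \notin S')) => // a b _.
by rewrite /del_rel /= => /and3P[].
Qed.

Definition Cmp u := [set y | connect (del_rel e S) u y].

Lemma comp_cut u : u \notin S -> cutcon e (Cmp u).
Proof.
move=> uS D sub [d0 d0D] [y0 y0C y0D].
case: (boolP [exists d, exists y, [&& d \in D, y \in Cmp u, y \notin D & e d y]]).
  case/existsP => d /existsP[y /and4P[? ? ? ?]]; by exists d, y.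
move/existsPn => hn; exfalso.
have d0C : d0 \in Cmp u by move/subsetP: sub; apply.
have cl : forall a b, a \in D -> del_rel e S a b -> b \in D.
  move=> a b aD dab; apply: contraT => bD.
  have bC : b \in Cmp u.
    have aC : a \in Cmp u by move/subsetP: sub; apply.
    move: aC; rewrite !inE => ca; apply: connect_trans ca _; exact: connect1.
  have := hn a; move/existsPn/(_ b); rewrite aD bC bD /=.
  by move: dab; rewrite /del_rel /= => /and3P[-> _ _].
have c0 : connect (del_rel e S) d0 y0.
  move: d0C y0C; rewrite !inE => c1 c2; apply: connect_trans c2; by rewrite csym.
by move: y0D; rewrite (closed_sub (P := fun y => y \in D) cl d0D c0).
Qed.

Lemma comp_anti u w a b : u \notin S -> w \notin S -> ~~ connect (del_rel e S) u w ->
  a \in Cmp u -> b \in Cmp w -> ~~ e a b.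
Proof.
move=> uS wS nc; rewrite !inE => ca cb; apply/negP => eab; move/negP: nc; apply.
have aS := notS uS ca; have bS := notS wS cb.
have cub : connect (del_rel e S) u b.
  apply: connect_trans ca _; apply: connect1; by rewrite /del_rel /= eab aS bS.
by apply: connect_trans cub _; rewrite csym.
Qed.

Lemma comp_full u w x : u \notin S -> ~~ connect (del_rel e S) u w ->
  connect (del_rel e (S :\ x)) u w -> x \in S -> exists2 a, a \in Cmp u & e x a.
Proof.
move=> uS nc c' xS.
case: (boolP [exists a, (a \in Cmp u) && e x a]).
  by case/existsP => a /andP[? ?]; exists a.
move/existsPn => hn; exfalso; move/negP: nc; apply.
have cl : forall a b, a \in Cmp u -> del_rel e (S :\ x) a b -> b \in Cmp u.
  move=> a b aC; rewrite /del_rel /= !in_setD1 => /and3P[eab na nb].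
  case: (eqVneq b x) => bx.
    by subst b; have := hn a; rewrite aC esym eab.
  move: nb; rewrite bx /= => bS.
  have aS : a \notin S by move: aC; rewrite inE; exact: notS.
  move: aC; rewrite !inE => ca; apply: connect_trans ca _; apply: connect1.
  by rewrite /del_rel /= eab aS bS.
have := closed_sub (P := fun y => y \in Cmp u) cl _ c'.
by rewrite !inE; apply; exact: connect0.
Qed.

End Sep.

Theorem theorem3 :
  exists alpha : R, (0 < alpha)%R /\
    forall (T : finType) (e : rel T), simple_graph e -> Pk_free e 7 ->
    forall S : {set T}, minimal_separator e S ->
    forall mu : T -> R, prob_on S mu ->
    exists v : T, (alpha <= mu_nbhd e S mu v)%R.
Proof.
exists (1/1000); split; first by lra.
move=> T e [esym eirr] P7f S [s [t [_ [[sS tS nst] min]]]] mu [mu0 mu1].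
case: (boolP [exists v, 1/1000 <= mu_nbhd e S mu v]) => [/existsP[v hv]|]; first by exists v.
move/existsPn => hn; exfalso.
have small : forall u, mu_nbhd e S mu u <= 1/1000.
  by move=> u; have := hn u; rewrite -ltNge => /ltW.
have apos : 0 < ((1/1000)%R : R) by lra.
have asmall : ((1/1000)%R : R) <= 1/1000 by lra.
have nts : ~~ connect (del_rel e S) t s by rewrite csym.
have conn' : forall x, x \in S -> connect (del_rel e (S :\ x)) s t.
  move=> x xS; apply/negPn/negP => nc; apply: (min (S :\ x)); first exact: properD1.
  by split => //; rewrite in_setD1 negb_and ?sS ?tS orbT.
set A := Cmp e S s; set B := Cmp e S t.
have fullA : forall x, x \in S -> exists2 a, a \in A & e x a.
  by move=> x xS; apply: (comp_full esym sS nst (conn' x xS) xS).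
have fullB : forall x, x \in S -> exists2 a, a \in B & e x a.
  by move=> x xS; apply: (comp_full esym tS nts _ xS); rewrite (csym esym); exact: conn'.
have antiAB : forall a b, a \in A -> b \in B -> ~~ e a b.
  by move=> a b; apply: comp_anti.
have antiBA : forall a b, a \in B -> b \in A -> ~~ e a b.
  by move=> a b aB bA; rewrite esym; apply: antiAB.
have cutA : cutcon e A by apply: comp_cut.
have cutB : cutcon e B by apply: comp_cut.
have tB : t \in B by rewrite inE connect0.
have sA : s \in A by rewrite inE connect0.
have cA := Core esym eirr P7f fullA fullB antiAB cutA cutB tB mu0 mu1 small apos asmall.
have cB := Core esym eirr P7f fullB fullA antiBA cutB cutA sA mu0 mu1 small apos asmall.
have : E S mu (fun v => ind (v \in Lset e S A mu) + ind (v \in Lset e S B mu))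
    < E S mu (fun _ => 1).
  by rewrite E_add (E_const mu1); lra.
case/(E_exists mu0) => v vS hv.
have rA : 1/4 <= rhoR e S mu A v.
  move: hv; rewrite /Lset !inE vS /=.
  case: (boolP (rhoR e S mu A v < 1/4)) => h.
    by rewrite ind_true; have := ind_ge0 (rhoR e S mu B v < 1 / 4); lra.
  by rewrite -leNgt in h.
have rB : 1/4 <= rhoR e S mu B v.
  move: hv; rewrite /Lset !inE vS /=.
  case: (boolP (rhoR e S mu B v < 1/4)) => h.
    by rewrite ind_true; have := ind_ge0 (rhoR e S mu A v < 1 / 4); lra.
  by rewrite -leNgt in h.
have g := GTavg esym eirr P7f antiAB mu0 mu1 small vS.
have hp : (1/4) * (1/4) <= rhoR e S mu A v * rhoR e S mu B v.
  by apply: ler_pM => //; lra.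
lra.
Qed.
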